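(* For $t\in(0,1)$ and $n\ge0$, $$x_n=2n+1+\alpha+\beta+tR_n,$$ $$\alpha_n=y_{n+1}-y_n+t(r_n-r_{n+1}),$$ $$\mathsf p_1(n,t)=-y_n(t)+t\,r_n(t).$$
   Context: Fix $\alpha>0$, $\beta>0$, and real $A,B$ with $A\ge0$, $A+B\ge0$, not both zero; $\theta$ is the Heaviside step function. For $t\in(0,1)$ let $w(x;t)=x^\alpha(1-x)^\beta(A+B\theta(x-t))$ on $[0,1]$, and let $P_n(x)=P_n(x;t)=x^n+\mathsf p_1(n,t)x^{n-1}+\cdots$ be the monic orthogonal polynomials: $\int_0^1P_iP_jw\,dx=h_i(t)\delta_{ij}$, $h_i>0$, satisfying $xP_n=P_{n+1}+\alpha_nP_n+\beta_nP_{n-1}$, $P_{-1}=0$, $\beta_n=h_n/h_{n-1}$, $\mathsf p_1(0,t)=0$. Define $R_n(t)=B\,t^\alpha(1-t)^\beta P_n(t;t)^2/h_n$, $r_n(t)=B\,t^\alpha(1-t)^\beta P_n(t;t)P_{n-1}(t;t)/h_{n-1}$ ($r_0=0$), $x_n(t)=\frac{\beta}{h_n}\int_0^1\frac{P_n(y)^2}{1-y}\,y^\alpha(1-y)^\beta(A+B\theta(y-t))\,dy$, $y_n(t)=\frac{\beta}{h_{n-1}}\int_0^1\frac{P_n(y)P_{n-1}(y)}{1-y}\,y^\alpha(1-y)^\beta(A+B\theta(y-t))\,dy$ ($y_0=0$). *)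

(* Defs.v *)
From Stdlib Require Import Reals Lra ClassicalEpsilon.
Open Scope R_scope.

(* Heaviside step function (value at 0 is irrelevant for all integrals). *)
Definition theta (x : R) : R := if Rle_dec 0 x then 1 else 0.

Definition weight (al be A B t x : R) : R :=
  Rpower x al * Rpower (1 - x) be * (A + B * theta (x - t)).

(* (Possibly improper at both endpoints) Riemann integral on (a,b):
   the limit of the Riemann integrals over [c,d] as c -> a+, d -> b-. *)
Definition is_int (f : R -> R) (a b l : R) : Prop :=
  forall eps, 0 < eps -> exists del, 0 < del /\
    forall c d, a < c -> c < a + del -> b - del < d -> d < b -> c < d ->
      exists pr : Riemann_integrable f c d, Rabs (RiemannInt pr - l) < eps.

Definition Int01 (f : R -> R) : R := epsilon (inhabits 0) (is_int f 0 1).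

Fixpoint polysum (a : nat -> R) (x : R) (m : nat) : R :=
  match m with
  | O => 0
  | S m' => polysum a x m' + a m' * x ^ m'
  end.

Definition Pm (c : nat -> nat -> R) (n : nat) (x : R) : R :=
  x ^ n + polysum (c n) x n.

Definition p1 (c : nat -> nat -> R) (n : nat) : R :=
  match n with O => 0 | S m => c n m end.

Definition Pprev (c : nat -> nat -> R) (n : nat) (x : R) : R :=
  match n with O => 0 | S m => Pm c m x end.

Definition Rn (al be B t : R) (c : nat -> nat -> R) (h : nat -> R) (n : nat) : R :=
  B * Rpower t al * Rpower (1 - t) be * (Pm c n t) ^ 2 / h n.

Definition rn (al be B t : R) (c : nat -> nat -> R) (h : nat -> R) (n : nat) : R :=
  match n with
  | O => 0
  | S m => B * Rpower t al * Rpower (1 - t) be * Pm c n t * Pm c m t / h m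
  end.

Definition xn (al be A B t : R) (c : nat -> nat -> R) (h : nat -> R) (n : nat) : R :=
  be / h n * Int01 (fun y => (Pm c n y) ^ 2 / (1 - y) * weight al be A B t y).

Definition yn (al be A B t : R) (c : nat -> nat -> R) (h : nat -> R) (n : nat) : R :=
  match n with
  | O => 0
  | S m => be / h m *
      Int01 (fun y => Pm c n y * Pm c m y / (1 - y) * weight al be A B t y)
  end.

(* Main.v *)
Require Import Defs.
From Stdlib Require Import Reals Lra ClassicalEpsilon FunctionalExtensionality RList List Lia.
Open Scope R_scope.

Lemma is_int_ext f g l :
  (forall x, 0 < x < 1 -> f x = g x) -> is_int f 0 1 l -> is_int g 0 1 l.
Proof.
  intros Hfg Hf eps Heps.
  destruct (Hf eps Heps) as [del [Hdel H]].
  exists del; split; [exact Hdel|].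
  intros c d H1 H2 H3 H4 H5.
  destruct (H c d H1 H2 H3 H4 H5) as [pr Hpr].
  assert (Hext : forall x, Rmin c d <= x <= Rmax c d -> f x = g x).
  { intros x Hx. rewrite Rmin_left in Hx by lra. rewrite Rmax_right in Hx by lra.
    apply Hfg; lra. }
  pose proof (Riemann_integrable_ext g Hext pr) as pr'.
  exists pr'.
  rewrite <- (RiemannInt_P18 pr pr'); [exact Hpr|lra|].
  intros x Hx; apply Hfg; lra.
Qed.

Lemma is_int_lin f g l1 l2 k :
  is_int f 0 1 l1 -> is_int g 0 1 l2 ->
  is_int (fun x => f x + k * g x) 0 1 (l1 + k * l2).
Proof.
  intros Hf Hg eps Heps.
  assert (Hk : 0 <= Rabs k) by apply Rabs_pos.
  destruct (Hf (eps/2)) as [d1 [Hd1 H1]]; [lra|].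
  destruct (Hg (eps/(2*(Rabs k + 1)))) as [d2 [Hd2 H2]].
  { apply Rdiv_lt_0_compat; lra. }
  exists (Rmin d1 d2); split; [apply Rmin_pos; lra|].
  intros c d Hc1 Hc2 Hd3 Hd4 Hcd.
  assert (m1 := Rmin_l d1 d2); assert (m2 := Rmin_r d1 d2).
  destruct (H1 c d) as [pr1 Hp1]; try lra.
  destruct (H2 c d) as [pr2 Hp2]; try lra.
  exists (RiemannInt_P10 k pr1 pr2).
  rewrite (RiemannInt_P13 pr1 pr2).
  replace (RiemannInt pr1 + k * RiemannInt pr2 - (l1 + k * l2))
    with ((RiemannInt pr1 - l1) + k * (RiemannInt pr2 - l2)) by ring.
  eapply Rle_lt_trans; [apply Rabs_triang|].
  rewrite Rabs_mult.
  assert (Rabs k * Rabs (RiemannInt pr2 - l2) <= Rabs k * (eps / (2 * (Rabs k + 1)))).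
  { apply Rmult_le_compat_l; lra. }
  assert (Rabs k * (eps / (2 * (Rabs k + 1))) < eps / 2).
  { replace (Rabs k * (eps / (2 * (Rabs k + 1)))) with (eps / 2 * (Rabs k / (Rabs k + 1))) by (field; lra).
    assert (Rabs k / (Rabs k + 1) < 1).
    { apply (Rmult_lt_reg_r (Rabs k + 1)); [lra|]. unfold Rdiv. rewrite Rmult_assoc, Rinv_l by lra. lra. }
    assert (0 <= Rabs k / (Rabs k + 1)) by (apply Rmult_le_pos; [lra| left; apply Rinv_0_lt_compat; lra]).
    nra. }
  lra.
Qed.

Lemma is_int_unique f l1 l2 : is_int f 0 1 l1 -> is_int f 0 1 l2 -> l1 = l2.
Proof.
  intros H1 H2.
  destruct (Req_dec l1 l2) as [E|NE]; [exact E|exfalso].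
  set (e := Rabs (l1 - l2) / 2).
  assert (He : 0 < e) by (unfold e; assert (0 < Rabs (l1 - l2)) by (apply Rabs_pos_lt; lra); lra).
  destruct (H1 e He) as [d1 [Hd1 K1]].
  destruct (H2 e He) as [d2 [Hd2 K2]].
  set (d := Rmin (Rmin d1 d2) 1).
  assert (Hd : 0 < d) by (unfold d; repeat apply Rmin_pos; lra).
  assert (m1 : d <= d1) by (unfold d; eapply Rle_trans; [apply Rmin_l| apply Rmin_l]).
  assert (m2 : d <= d2) by (unfold d; eapply Rle_trans; [apply Rmin_l| apply Rmin_r]).
  assert (m3 : d <= 1) by (unfold d; apply Rmin_r).
  destruct (K1 (d/4) (1 - d/4)) as [p1 Q1]; try lra.
  destruct (K2 (d/4) (1 - d/4)) as [p2 Q2]; try lra.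
  rewrite (RiemannInt_P5 p2 p1) in Q2.
  assert (Rabs (l1 - l2) <= Rabs (RiemannInt p1 - l2) + Rabs (RiemannInt p1 - l1)).
  { replace (l1 - l2) with ((RiemannInt p1 - l2) - (RiemannInt p1 - l1)) by ring.
    eapply Rle_trans; [apply Rabs_triang|]. rewrite Rabs_Ropp. lra. }
  unfold e in *; lra.
Qed.

Lemma Int01_spec f l : is_int f 0 1 l -> Int01 f = l.
Proof.
  intros H. unfold Int01.
  apply (is_int_unique f); [|exact H].
  apply epsilon_spec. exists l; exact H.
Qed.

Definition lim0 (b : R -> R) := forall e, 0 < e -> exists del, 0 < del /\
  forall c, 0 < c < del -> Rabs (b c) < e.
Definition lim1 (b : R -> R) := forall e, 0 < e -> exists del, 0 < del /\
  forall d, 1 - del < d < 1 -> Rabs (b d) < e.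

Lemma small_mult k x e : 0 < e -> Rabs x < e / (Rabs k + 1) -> Rabs (k * x) < e.
Proof.
  intros He Hx. rewrite Rabs_mult.
  assert (Hk : 0 <= Rabs k) by apply Rabs_pos.
  assert (0 <= Rabs x) by apply Rabs_pos.
  apply Rle_lt_trans with (Rabs k * (e / (Rabs k + 1))).
  { apply Rmult_le_compat_l; lra. }
  replace (Rabs k * (e / (Rabs k + 1))) with (e * (Rabs k / (Rabs k + 1))) by (field; lra).
  assert (Rabs k / (Rabs k + 1) < 1).
  { apply (Rmult_lt_reg_r (Rabs k + 1)); [lra|]. unfold Rdiv. rewrite Rmult_assoc, Rinv_l by lra. lra. }
  nra.
Qed.

Lemma is_int_comb f f1 f2 l1 l2 k1 k2 b1 b2 K t :
  0 < t < 1 ->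
  is_int f1 0 1 l1 -> is_int f2 0 1 l2 -> lim0 b1 -> lim1 b2 ->
  (forall c d, 0 < c -> c < t -> t < d -> d < 1 ->
     forall (pr1 : Riemann_integrable f1 c d) (pr2 : Riemann_integrable f2 c d),
     exists pr : Riemann_integrable f c d,
       RiemannInt pr = k1 * RiemannInt pr1 + k2 * RiemannInt pr2 + b1 c + b2 d + K) ->
  is_int f 0 1 (k1 * l1 + k2 * l2 + K).
Proof.
  intros Ht H1 H2 B1 B2 Hid eps Heps.
  assert (He4 : 0 < eps / 4) by lra.
  assert (P1 : 0 < eps / 4 / (Rabs k1 + 1)) by (apply Rdiv_lt_0_compat; [lra| assert (0<= Rabs k1) by apply Rabs_pos; lra]).
  assert (P2 : 0 < eps / 4 / (Rabs k2 + 1)) by (apply Rdiv_lt_0_compat; [lra| assert (0<= Rabs k2) by apply Rabs_pos; lra]).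
  destruct (H1 _ P1) as [d1 [Hd1 K1]].
  destruct (H2 _ P2) as [d2 [Hd2 K2]].
  destruct (B1 _ He4) as [d3 [Hd3 K3]].
  destruct (B2 _ He4) as [d4 [Hd4 K4]].
  set (d := Rmin (Rmin (Rmin d1 d2) (Rmin d3 d4)) (Rmin t (1 - t))).
  assert (Hd : 0 < d) by (unfold d; repeat apply Rmin_pos; lra).
  assert (m1 : d <= d1) by (unfold d; repeat (eapply Rle_trans; [apply Rmin_l|]); lra).
  assert (m2 : d <= d2) by (unfold d; eapply Rle_trans; [apply Rmin_l|]; eapply Rle_trans; [apply Rmin_l|]; apply Rmin_r).
  assert (m3 : d <= d3) by (unfold d; eapply Rle_trans; [apply Rmin_l|]; eapply Rle_trans; [apply Rmin_r|]; apply Rmin_l).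
  assert (m4 : d <= d4) by (unfold d; eapply Rle_trans; [apply Rmin_l|]; eapply Rle_trans; [apply Rmin_r|]; apply Rmin_r).
  assert (m5 : d <= t) by (unfold d; eapply Rle_trans; [apply Rmin_r|]; apply Rmin_l).
  assert (m6 : d <= 1 - t) by (unfold d; eapply Rle_trans; [apply Rmin_r|]; apply Rmin_r).
  exists d; split; [exact Hd|].
  intros c e Hc1 Hc2 He1 He2 Hce.
  destruct (K1 c e) as [pr1 Q1]; try lra.
  destruct (K2 c e) as [pr2 Q2]; try lra.
  destruct (Hid c e ltac:(lra) ltac:(lra) ltac:(lra) ltac:(lra) pr1 pr2) as [pr Hpr].
  exists pr. rewrite Hpr.
  assert (A3 := K3 c ltac:(lra)).
  assert (A4 := K4 e ltac:(lra)).
  assert (A1 := small_mult k1 (RiemannInt pr1 - l1) (eps/4) He4 Q1).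
  assert (A2 := small_mult k2 (RiemannInt pr2 - l2) (eps/4) He4 Q2).
  replace (k1 * RiemannInt pr1 + k2 * RiemannInt pr2 + b1 c + b2 e + K - (k1 * l1 + k2 * l2 + K))
    with ((k1 * (RiemannInt pr1 - l1) + k2 * (RiemannInt pr2 - l2)) + (b1 c + b2 e)) by ring.
  eapply Rle_lt_trans; [apply Rabs_triang|].
  assert (Rabs (k1 * (RiemannInt pr1 - l1) + k2 * (RiemannInt pr2 - l2)) <=
    Rabs (k1 * (RiemannInt pr1 - l1)) + Rabs (k2 * (RiemannInt pr2 - l2))) by apply Rabs_triang.
  assert (Rabs (b1 c + b2 e) <= Rabs (b1 c) + Rabs (b2 e)) by apply Rabs_triang.
  lra.
Qed.

Lemma theta_adapted c t : c < t ->
  adapted_couple (fun y => theta (y - t)) c t (cons c (cons t nil)) (cons 0 nil).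
Proof.
  intros H; unfold adapted_couple; repeat split.
  - unfold ordered_Rlist; intros; simpl in H0; inversion H0;
      [ simpl; lra | elim (Nat.nle_succ_0 _ H2) ].
  - simpl; unfold Rmin; destruct (Rle_dec c t); lra.
  - simpl; unfold Rmax; destruct (Rle_dec c t); lra.
  - unfold constant_D_eq, open_interval; intros i Hi x Hx.
    destruct i as [|i]; [|simpl in Hi; exfalso; apply (Nat.nlt_0_r i); apply Nat.succ_lt_mono; exact Hi].
    simpl in Hx. simpl. unfold theta. destruct (Rle_dec 0 (x - t)); lra.
Qed.

Definition theta_SF c t (H : c < t) : StepFun c t :=
  mkStepFun (existT _ _ (existT _ _ (theta_adapted c t H)) : IsStepFun (fun y => theta (y - t)) c t).

Lemma theta_integrable c t : c < t -> Riemann_integrable (fun y => theta (y - t)) c t.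
Proof.
  intros H eps.
  exists (theta_SF c t H).
  exists (mkStepFun (StepFun_P4 c t 0)).
  split.
  - intros x _. simpl. unfold fct_cte. rewrite Rminus_diag, Rabs_R0. lra.
  - rewrite StepFun_P18. rewrite Rmult_0_l, Rabs_R0. apply cond_pos.
Defined.

Lemma RI_scal k H a b (pr : Riemann_integrable (fun y => k * H y) a b)
  (pr1 : Riemann_integrable H a b) : a <= b -> RiemannInt pr = k * RiemannInt pr1.
Proof.
  intros Hab.
  pose proof (RiemannInt_P10 k (RiemannInt_P14 a b 0) pr1) as pr2.
  rewrite (RiemannInt_P18 pr pr2 Hab).
  - rewrite (RiemannInt_P13 (RiemannInt_P14 a b 0) pr1 pr2).
    rewrite RiemannInt_P15. ring.
  - intros; unfold fct_cte; ring.
Qed.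

Section Split.
Variables (A B t : R) (H : R -> R).

Lemma split_integrable c d : c < t < d ->
  (forall x, c <= x <= d -> continuity_pt H x) ->
  Riemann_integrable (fun y => H y * (A + B * theta (y - t))) c d.
Proof.
  intros Hct HH.
  apply RiemannInt_P24 with t.
  - assert (Hext : forall x, Rmin c t <= x <= Rmax c t ->
       (fun y => A * H y + (B * H t) * theta (y - t)) x = H x * (A + B * theta (x - t))).
    { intros x Hx. rewrite Rmin_left in Hx by lra. rewrite Rmax_right in Hx by lra.
      unfold theta. destruct (Rle_dec 0 (x - t)).
      - replace x with t by lra. ring.
      - ring. }
    apply (Riemann_integrable_ext _ Hext).
    apply RiemannInt_P10; [|apply theta_integrable; lra].
    apply continuity_implies_RiemannInt; [lra|].
    intros x Hx. apply continuity_pt_mult; [apply continuity_pt_const; intros ? ?; reflexivity|].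
    apply HH; lra.
  - assert (Hext : forall x, Rmin t d <= x <= Rmax t d ->
       (fun y => (A + B) * H y) x = H x * (A + B * theta (x - t))).
    { intros x Hx. rewrite Rmin_left in Hx by lra. rewrite Rmax_right in Hx by lra.
      unfold theta. destruct (Rle_dec 0 (x - t)); [ring| lra]. }
    apply (Riemann_integrable_ext _ Hext).
    apply continuity_implies_RiemannInt; [lra|].
    intros x Hx. apply continuity_pt_mult; [apply continuity_pt_const; intros ? ?; reflexivity|].
    apply HH; lra.
Qed.

Lemma split_value c d : c < t < d ->
  forall (pr : Riemann_integrable (fun y => H y * (A + B * theta (y - t))) c d)
    (pr1 : Riemann_integrable H c t) (pr2 : Riemann_integrable H t d),
  RiemannInt pr = A * RiemannInt pr1 + (A + B) * RiemannInt pr2.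
Proof.
  intros Hct pr pr1 pr2.
  pose proof (RiemannInt_P22 pr (conj (Rlt_le _ _ (proj1 Hct)) (Rlt_le _ _ (proj2 Hct)))) as q1.
  pose proof (RiemannInt_P23 pr (conj (Rlt_le _ _ (proj1 Hct)) (Rlt_le _ _ (proj2 Hct)))) as q2.
  rewrite <- (RiemannInt_P26 q1 q2 pr).
  pose proof (Riemann_integrable_scal A pr1) as s1.
  pose proof (Riemann_integrable_scal (A + B) pr2) as s2.
  rewrite <- (RI_scal A H c t s1 pr1) by lra.
  rewrite <- (RI_scal (A + B) H t d s2 pr2) by lra.
  f_equal.
  - apply RiemannInt_P18; [lra|]. intros x Hx.
    unfold theta. destruct (Rle_dec 0 (x - t)); [lra|ring].
  - apply RiemannInt_P18; [lra|]. intros x Hx.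
    unfold theta. destruct (Rle_dec 0 (x - t)); [ring|lra].
Qed.
End Split.

Lemma FTC f g a b : a <= b -> (forall x, a <= x <= b -> continuity_pt f x) ->
  (forall x, a <= x <= b -> derivable_pt_lim g x (f x)) ->
  forall pr : Riemann_integrable f a b, RiemannInt pr = g b - g a.
Proof.
  intros H H0 Hd pr.
  rewrite (RiemannInt_P20 H (FTC_P1 H H0) pr).
  assert (H1 := RiemannInt_P29 H H0).
  assert (H2 : antiderivative f g a b).
  { split; [|exact H]. intros x Hx.
    exists (exist _ (f x) (Hd x Hx)). reflexivity. }
  destruct (antiderivative_Ucte f _ _ _ _ H1 H2) as [C H3].
  rewrite !H3; [ring| split; lra | split; lra].
Qed.

Lemma D_plus f g x a b : derivable_pt_lim f x a -> derivable_pt_lim g x b ->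
  derivable_pt_lim (fun y => f y + g y) x (a + b).
Proof. intros; apply (derivable_pt_lim_plus f g); auto. Qed.
Lemma D_mult f g x a b : derivable_pt_lim f x a -> derivable_pt_lim g x b ->
  derivable_pt_lim (fun y => f y * g y) x (a * g x + f x * b).
Proof. intros; apply (derivable_pt_lim_mult f g); auto. Qed.
Lemma D_const k x : derivable_pt_lim (fun _ => k) x 0.
Proof. apply (derivable_pt_lim_const k). Qed.
Lemma D_id x : derivable_pt_lim (fun y => y) x 1.
Proof. apply derivable_pt_lim_id. Qed.
Lemma D_ext f g x a b : (forall y, f y = g y) -> a = b -> derivable_pt_lim f x a -> derivable_pt_lim g x b.
Proof. intros E Eab H. replace g with f by (apply functional_extensionality; auto). subst; auto. Qed.
Lemma D_cont f x l : derivable_pt_lim f x l -> continuity_pt f x.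
Proof. intros H. apply derivable_continuous_pt. exists l. exact H. Qed.

Lemma D_pow1m be x : x < 1 ->
  derivable_pt_lim (fun y => Rpower (1 - y) be) x (- (be * Rpower (1 - x) (be - 1))).
Proof.
  intros Hx.
  assert (H1 : derivable_pt_lim (fun y => 1 - y) x (-1)).
  { apply (D_ext (fun y => (fun _ => 1) y + (-1) * (fun y => y) y) _ _ (0 + ((0 * x) + (-1) * 1))).
    - intros; ring. - ring.
    - apply D_plus; [apply D_const|]. apply D_mult; [apply D_const| apply D_id]. }
  assert (H2 := derivable_pt_lim_power (1 - x) be ltac:(lra)).
  assert (H3 := derivable_pt_lim_comp (fun y => 1 - y) (fun z => Rpower z be) x _ _ H1 H2).
  eapply D_ext; [| | exact H3]; [intros; reflexivity| ring].
Qed.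

Lemma Rpower_le1 x a : 0 < x <= 1 -> 0 <= a -> Rpower x a <= 1.
Proof.
  intros Hx Ha. unfold Rpower. rewrite <- exp_0.
  destruct (Req_dec x 1) as [E|E].
  - subst. rewrite ln_1, Rmult_0_r. lra.
  - assert (ln x < 0).
    { rewrite <- ln_1. apply ln_increasing; lra. }
    destruct (Req_dec a 0); [subst; rewrite Rmult_0_l; lra|]. assert (0 < a) by lra.
    left. apply exp_increasing. nra.
Qed.

Lemma Rpower_pos x a : 0 < Rpower x a.
Proof. unfold Rpower. apply exp_pos. Qed.

Section IBP.
Variables (al be A B t : R) (Q Q' : R -> R).
Hypothesis Hal : 0 < al.
Hypothesis Hbe : 0 < be.
Hypothesis HQ : forall x, derivable_pt_lim Q x (Q' x).
Hypothesis HQ' : forall x, continuity_pt Q' x.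

Definition uu y := Rpower y al * Rpower (1 - y) be.
Definition gg y := Rpower y (al + 1) * Rpower (1 - y) be * Q y.
Definition H1 y := Q y / (1 - y) * uu y.
Definition H2 y := Q y * uu y.
Definition H3 y := y * Q' y * uu y.

Lemma uu_D x : 0 < x < 1 -> derivable_pt_lim uu x
   (al * Rpower x (al - 1) * Rpower (1 - x) be + Rpower x al * (- (be * Rpower (1 - x) (be - 1)))).
Proof.
  intros Hx. unfold uu.
  assert (D1 := derivable_pt_lim_power x al ltac:(lra)).
  assert (D2 := D_pow1m be x ltac:(lra)).
  exact (D_mult _ _ _ _ _ D1 D2).
Qed.

Lemma uu_cont x : 0 < x < 1 -> continuity_pt uu x.
Proof. intros; eapply D_cont; apply uu_D; auto. Qed.

Lemma H_cont x : 0 < x < 1 ->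
  continuity_pt H1 x /\ continuity_pt H2 x /\ continuity_pt H3 x.
Proof.
  intros Hx.
  assert (cQ : continuity_pt Q x) by (eapply D_cont; apply HQ).
  assert (cu := uu_cont x Hx).
  assert (c1m : continuity_pt (fun y => 1 - y) x).
  { apply (D_cont _ _ (-1)). apply (D_ext (fun y => (fun _ => 1) y + (-1) * (fun y => y) y) _ _ (0 + ((0 * x) + (-1) * 1))).
    - intros; ring. - ring.
    - apply D_plus; [apply D_const|]. apply D_mult; [apply D_const| apply D_id]. }
  assert (cid : continuity_pt (fun y => y) x) by (eapply D_cont; apply D_id).
  repeat split.
  - unfold H1. apply (continuity_pt_mult (fun y => Q y / (1 - y)) uu); [|exact cu].
    apply (continuity_pt_div Q (fun y => 1 - y)); auto; lra.
  - unfold H2. apply (continuity_pt_mult Q uu); auto.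
  - unfold H3. apply (continuity_pt_mult (fun y => y * Q' y) uu); auto.
    apply (continuity_pt_mult (fun y => y) Q'); auto.
Qed.

Lemma gg_D x : 0 < x < 1 ->
  derivable_pt_lim gg x ((H3 x + (al + 1 + be) * H2 x) + (- be) * H1 x).
Proof.
  intros Hx. unfold gg.
  assert (D1 := derivable_pt_lim_power x (al + 1) ltac:(lra)).
  assert (D2 := D_pow1m be x ltac:(lra)).
  assert (D3 := D_mult _ _ _ _ _ (D_mult _ _ _ _ _ D1 D2) (HQ x)).
  eapply D_ext; [intros; reflexivity| | exact D3].
  unfold H1, H2, H3, uu.
  replace (al + 1 - 1) with al by ring.
  assert (E1 : Rpower x (al + 1) = Rpower x al * x) by (rewrite Rpower_plus, Rpower_1; lra).
  assert (E2 : Rpower (1 - x) be = Rpower (1 - x) (be - 1) * (1 - x)).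
  { rewrite <- (Rpower_1 (1 - x)) at 3 by lra. rewrite <- Rpower_plus. f_equal; ring. }
  rewrite E1, E2. field. lra.
Qed.

Lemma G_cont x : 0 < x < 1 ->
  continuity_pt (fun y => (H3 y + (al + 1 + be) * H2 y) + (- be) * H1 y) x.
Proof.
  intros Hx. destruct (H_cont x Hx) as [c1 [c2 c3]].
  assert (cc : forall k, continuity_pt (fun _ => k) x) by (intros; apply continuity_pt_const; intros ? ?; reflexivity).
  apply (continuity_pt_plus (fun y => H3 y + (al + 1 + be) * H2 y) (fun y => (- be) * H1 y)).
  - apply (continuity_pt_plus H3 (fun y => (al + 1 + be) * H2 y)); auto.
    apply (continuity_pt_mult (fun _ => al + 1 + be) H2); auto.
  - apply (continuity_pt_mult (fun _ => - be) H1); auto.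
Qed.

Lemma piece a b (Hab : a <= b) (Ha : 0 < a) (Hb : b < 1)
  (a1 : Riemann_integrable H1 a b) (a2 : Riemann_integrable H2 a b) (a3 : Riemann_integrable H3 a b) :
  RiemannInt a3 + (al + 1 + be) * RiemannInt a2 + (- be) * RiemannInt a1 = gg b - gg a.
Proof.
  pose proof (RiemannInt_P10 (- be) (RiemannInt_P10 (al + 1 + be) a3 a2) a1) as prG.
  rewrite <- (RiemannInt_P13 a3 a2 (RiemannInt_P10 (al + 1 + be) a3 a2)).
  rewrite <- (RiemannInt_P13 _ a1 prG).
  apply (FTC (fun y => (H3 y + (al + 1 + be) * H2 y) + (- be) * H1 y)); auto.
  - intros; apply G_cont; lra.
  - intros; apply gg_D; lra.
Qed.

Lemma ibp c d : 0 < c -> c < t -> t < d -> d < 1 ->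
 forall (pr1 : Riemann_integrable (fun y => Q y / (1 - y) * weight al be A B t y) c d)
   (pr2 : Riemann_integrable (fun y => Q y * weight al be A B t y) c d)
   (pr3 : Riemann_integrable (fun y => y * Q' y * weight al be A B t y) c d),
 be * RiemannInt pr1 = (al + 1 + be) * RiemannInt pr2 + RiemannInt pr3
    + A * gg c - (A + B) * gg d + B * gg t.
Proof.
  intros Hc Hct Htd Hd.
  assert (E1 : (fun y => Q y / (1 - y) * weight al be A B t y) = (fun y => H1 y * (A + B * theta (y - t))))
    by (apply functional_extensionality; intros; unfold H1, uu, weight; ring).
  assert (E2 : (fun y => Q y * weight al be A B t y) = (fun y => H2 y * (A + B * theta (y - t))))
    by (apply functional_extensionality; intros; unfold H2, uu, weight; ring).
  assert (E3 : (fun y => y * Q' y * weight al be A B t y) = (fun y => H3 y * (A + B * theta (y - t))))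
    by (apply functional_extensionality; intros; unfold H3, uu, weight; ring).
  rewrite E1, E2, E3. intros pr1 pr2 pr3.
  assert (HC : forall a b, 0 < a -> b < 1 -> a <= b -> forall x, a <= x <= b ->
     continuity_pt H1 x /\ continuity_pt H2 x /\ continuity_pt H3 x)
    by (intros; apply H_cont; lra).
  pose proof (@continuity_implies_RiemannInt H1 c t ltac:(lra) (fun x Hx => proj1 (HC c t Hc ltac:(lra) ltac:(lra) x Hx))) as a1.
  pose proof (@continuity_implies_RiemannInt H2 c t ltac:(lra) (fun x Hx => proj1 (proj2 (HC c t Hc ltac:(lra) ltac:(lra) x Hx)))) as a2.
  pose proof (@continuity_implies_RiemannInt H3 c t ltac:(lra) (fun x Hx => proj2 (proj2 (HC c t Hc ltac:(lra) ltac:(lra) x Hx)))) as a3.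
  pose proof (@continuity_implies_RiemannInt H1 t d ltac:(lra) (fun x Hx => proj1 (HC t d ltac:(lra) Hd ltac:(lra) x Hx))) as b1.
  pose proof (@continuity_implies_RiemannInt H2 t d ltac:(lra) (fun x Hx => proj1 (proj2 (HC t d ltac:(lra) Hd ltac:(lra) x Hx)))) as b2.
  pose proof (@continuity_implies_RiemannInt H3 t d ltac:(lra) (fun x Hx => proj2 (proj2 (HC t d ltac:(lra) Hd ltac:(lra) x Hx)))) as b3.
  rewrite (split_value A B t H1 c d ltac:(lra) pr1 a1 b1).
  rewrite (split_value A B t H2 c d ltac:(lra) pr2 a2 b2).
  rewrite (split_value A B t H3 c d ltac:(lra) pr3 a3 b3).
  pose proof (piece c t ltac:(lra) Hc ltac:(lra) a1 a2 a3) as P1.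
  pose proof (piece t d ltac:(lra) ltac:(lra) Hd b1 b2 b3) as P2.
  set (x1 := RiemannInt a1) in *. set (x2 := RiemannInt a2) in *. set (x3 := RiemannInt a3) in *.
  set (y1 := RiemannInt b1) in *. set (y2 := RiemannInt b2) in *. set (y3 := RiemannInt b3) in *.
  assert (Q1 : be * x1 = x3 + (al + 1 + be) * x2 - (gg t - gg c)) by lra.
  assert (Q2 : be * y1 = y3 + (al + 1 + be) * y2 - (gg d - gg t)) by lra.
  transitivity (A * (be * x1) + (A + B) * (be * y1)); [ring|].
  rewrite Q1, Q2. ring.
Qed.
End IBP.

Lemma cont_bound f x0 : continuity_pt f x0 -> exists del M, 0 < del /\ 0 <= M /\
  forall x, Rabs (x - x0) < del -> Rabs (f x) <= M.
Proof.
  intros Hc.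
  destruct (Hc 1 ltac:(lra)) as [del [Hdel Hx]].
  exists del, (Rabs (f x0) + 1). split; [exact Hdel|]. split; [assert (0 <= Rabs (f x0)) by apply Rabs_pos; lra|].
  intros x Hxd.
  destruct (Req_dec x x0) as [E|NE]; [subst; lra|].
  assert (K : R_dist (f x) (f x0) < 1).
  { apply Hx. split; [split; [exact I| auto]| exact Hxd]. }
  unfold R_dist in K.
  assert (Rabs (f x) <= Rabs (f x - f x0) + Rabs (f x0)).
  { replace (f x) with ((f x - f x0) + f x0) at 1 by ring. apply Rabs_triang. }
  lra.
Qed.

Lemma gg_lim0 al be Q k : 0 < al -> 0 < be -> continuity_pt Q 0 ->
  lim0 (fun c => k * gg al be Q c).
Proof.
  intros Hal Hbe HQ e He.
  destruct (cont_bound Q 0 HQ) as [d0 [M [Hd0 [HM HB]]]].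
  assert (Hk : 0 <= Rabs k) by apply Rabs_pos.
  assert (HkM : 0 <= Rabs k * M) by (apply Rmult_le_pos; lra).
  set (e' := e / (Rabs k * M + 1)).
  assert (He' : 0 < e') by (unfold e'; apply Rdiv_lt_0_compat; lra).
  exists (Rmin (Rmin d0 1) e'). split; [repeat apply Rmin_pos; lra|].
  intros c [Hc1 Hc2].
  assert (c < d0) by (eapply Rlt_le_trans; [exact Hc2|]; eapply Rle_trans; apply Rmin_l).
  assert (c < 1) by (eapply Rlt_le_trans; [exact Hc2|]; eapply Rle_trans; [apply Rmin_l| apply Rmin_r]).
  assert (Hce : c < e') by (eapply Rlt_le_trans; [exact Hc2|]; apply Rmin_r).
  unfold gg. rewrite Rpower_plus, Rpower_1 by lra.
  assert (B1 := Rpower_le1 c al ltac:(lra) ltac:(lra)).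
  assert (B2 := Rpower_le1 (1 - c) be ltac:(lra) ltac:(lra)).
  assert (P1 := Rpower_pos c al). assert (P2 := Rpower_pos (1 - c) be).
  assert (B3 : Rabs (Q c) <= M) by (apply HB; rewrite Rminus_0_r, Rabs_right; lra).
  rewrite !Rabs_mult, (Rabs_right (Rpower c al)), (Rabs_right c), (Rabs_right (Rpower (1 - c) be)) by lra.
  assert (Rpower c al * c * Rpower (1 - c) be <= c).
  { assert (Rpower c al * c <= c) by nra. assert (0 <= Rpower c al * c) by nra. nra. }
  assert (0 <= Rpower c al * c * Rpower (1 - c) be) by (apply Rmult_le_pos; nra).
  assert (0 <= Rabs (Q c)) by apply Rabs_pos.
  assert (X : Rpower c al * c * Rpower (1 - c) be * Rabs (Q c) <= c * M) by nra.
  assert (Rabs k * (Rpower c al * c * Rpower (1 - c) be * Rabs (Q c)) <= Rabs k * (c * M)) by (apply Rmult_le_compat_l; lra).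
  assert (c * (Rabs k * M + 1) < e).
  { unfold e' in *. apply (Rmult_lt_compat_r (Rabs k * M + 1)) in Hce; [|lra].
    unfold Rdiv in Hce. rewrite Rmult_assoc, Rinv_l in Hce by lra. lra. }
  nra.
Qed.

Lemma gg_lim1 al be Q k : 0 < al -> 0 < be -> continuity_pt Q 1 ->
  lim1 (fun d => k * gg al be Q d).
Proof.
  intros Hal Hbe HQ e He.
  destruct (cont_bound Q 1 HQ) as [d0 [M [Hd0 [HM HB]]]].
  assert (Hk : 0 <= Rabs k) by apply Rabs_pos.
  assert (HkM : 0 <= Rabs k * M) by (apply Rmult_le_pos; lra).
  set (e' := e / (Rabs k * M + 1)).
  assert (He' : 0 < e') by (unfold e'; apply Rdiv_lt_0_compat; lra).
  set (r := Rpower e' (/ be)).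
  assert (Hr : 0 < r) by apply Rpower_pos.
  exists (Rmin (Rmin d0 1) r). split; [repeat apply Rmin_pos; lra|].
  intros d [Hd1 Hd2].
  assert (1 - d < d0) by (assert (Rmin (Rmin d0 1) r <= d0) by (eapply Rle_trans; apply Rmin_l); lra).
  assert (0 < d) by (assert (Rmin (Rmin d0 1) r <= 1) by (eapply Rle_trans; [apply Rmin_l| apply Rmin_r]); lra).
  assert (1 - d < r) by (assert (Rmin (Rmin d0 1) r <= r) by apply Rmin_r; lra).
  assert (Hpe : Rpower (1 - d) be < e').
  { replace e' with (Rpower r be).
    - apply Rlt_Rpower_l; lra.
    - unfold r. rewrite Rpower_mult. rewrite Rinv_l by lra. apply Rpower_1; lra. }
  unfold gg.
  assert (B1 := Rpower_le1 d (al + 1) ltac:(lra) ltac:(lra)).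
  assert (P1 := Rpower_pos d (al + 1)). assert (P2 := Rpower_pos (1 - d) be).
  assert (B3 : Rabs (Q d) <= M) by (apply HB; rewrite Rabs_left; lra).
  rewrite !Rabs_mult, (Rabs_right (Rpower d (al + 1))), (Rabs_right (Rpower (1 - d) be)) by lra.
  assert (0 <= Rabs (Q d)) by apply Rabs_pos.
  assert (X : Rpower d (al + 1) * Rpower (1 - d) be * Rabs (Q d) <= Rpower (1 - d) be * M).
  { assert (Rpower d (al + 1) * Rpower (1 - d) be <= Rpower (1 - d) be) by nra.
    assert (0 <= Rpower d (al + 1) * Rpower (1 - d) be) by nra. nra. }
  assert (Rabs k * (Rpower d (al + 1) * Rpower (1 - d) be * Rabs (Q d)) <= Rabs k * (Rpower (1 - d) be * M)) by (apply Rmult_le_compat_l; lra).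
  assert (Rpower (1 - d) be * (Rabs k * M + 1) < e).
  { unfold e' in *. apply (Rmult_lt_compat_r (Rabs k * M + 1)) in Hpe; [|lra].
    unfold Rdiv in Hpe. rewrite Rmult_assoc, Rinv_l in Hpe by lra. lra. }
  nra.
Qed.

Lemma key al be A B t Q Q' L2 L3 : 0 < al -> 0 < be -> 0 < t < 1 ->
  (forall x, derivable_pt_lim Q x (Q' x)) -> (forall x, continuity_pt Q' x) ->
  is_int (fun y => Q y * weight al be A B t y) 0 1 L2 ->
  is_int (fun y => y * Q' y * weight al be A B t y) 0 1 L3 ->
  is_int (fun y => Q y / (1 - y) * weight al be A B t y) 0 1
    ((al + 1 + be) / be * L2 + / be * L3 + B * gg al be Q t / be).
Proof.
  intros Hal Hbe Ht HQ HQ' I2 I3.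
  apply (is_int_comb _ _ _ L2 L3 _ _ (fun c => (A / be) * gg al be Q c)
           (fun d => (- (A + B) / be) * gg al be Q d) _ t Ht I2 I3).
  - apply gg_lim0; auto. eapply D_cont; apply HQ.
  - apply gg_lim1; auto. eapply D_cont; apply HQ.
  - intros c d Hc Hct Htd Hd pr2 pr3.
    assert (E1 : (fun y => H1 al be Q y * (A + B * theta (y - t))) = (fun y => Q y / (1 - y) * weight al be A B t y))
      by (apply functional_extensionality; intros; unfold H1, uu, weight; ring).
    pose proof (split_integrable A B t (H1 al be Q) c d ltac:(lra)
       (fun x Hx => proj1 (H_cont al be Q Q' HQ HQ' x ltac:(lra)))) as pr0.
    rewrite E1 in pr0. exists pr0.
    pose proof (ibp al be A B t Q Q' HQ HQ' c d Hc Hct Htd Hd pr0 pr2 pr3) as E.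
    apply (Rmult_eq_reg_l be); [|lra].
    rewrite E. field. lra.
Qed.

Fixpoint dpoly (a : nat -> R) (x : R) (m : nat) : R :=
  match m with
  | O => 0
  | S m' => dpoly a x m' + a m' * (INR m' * x ^ pred m')
  end.

Definition shift (a : nat -> R) (i : nat) : R := match i with O => 0 | S j => a j end.

Lemma polysum_ext a b x m : (forall i, (i < m)%nat -> a i = b i) -> polysum a x m = polysum b x m.
Proof.
  induction m as [|m IH]; intros E; simpl; [reflexivity|].
  rewrite IH by (intros; apply E; auto). rewrite E by auto. reflexivity.
Qed.

Lemma polysum_lin a b k x m : polysum (fun i => a i + k * b i) x m = polysum a x m + k * polysum b x m.
Proof. induction m as [|m IH]; simpl; [ring|]. rewrite IH. ring. Qed.

Lemma polysum_shift a x m : x * polysum a x m = polysum (shift a) x (S m).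
Proof.
  induction m as [|m IH]; simpl; [ring|].
  simpl in IH. rewrite Rmult_plus_distr_l, IH. ring.
Qed.

Lemma polysum_D a m x : derivable_pt_lim (fun y => polysum a y m) x (dpoly a x m).
Proof.
  induction m as [|m IH]; simpl.
  - apply D_const.
  - apply (D_ext (fun y => polysum a y m + (fun _ => a m) y * (fun y => y ^ m) y) _ _
      (dpoly a x m + (0 * x ^ m + a m * (INR m * x ^ pred m)))); [intros; reflexivity| ring|].
    apply D_plus; [exact IH|]. apply D_mult; [apply D_const| apply derivable_pt_lim_pow].
Qed.

Lemma polysum_cont a m x : continuity_pt (fun y => polysum a y m) x.
Proof. eapply D_cont; apply polysum_D. Qed.

Lemma dpoly_cont a m x : continuity_pt (fun y => dpoly a y m) x.
Proof.
  induction m as [|m IH]; simpl.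
  - apply continuity_pt_const; intros ? ?; reflexivity.
  - apply (continuity_pt_plus (fun y => dpoly a y m) (fun y => a m * (INR m * y ^ pred m))); auto.
    apply (continuity_pt_mult (fun _ => a m) (fun y => INR m * y ^ pred m)).
    + apply continuity_pt_const; intros ? ?; reflexivity.
    + apply (continuity_pt_mult (fun _ => INR m) (fun y => y ^ pred m)).
      * apply continuity_pt_const; intros ? ?; reflexivity.
      * eapply D_cont; apply derivable_pt_lim_pow.
Qed.

Lemma x_pow_pred n x : x * (INR n * x ^ pred n) = INR n * x ^ n.
Proof. destruct n; simpl; ring. Qed.

Lemma x_dpoly a x m : x * dpoly a x m = polysum (fun k => INR k * a k) x m.
Proof.
  induction m as [|m IH]; simpl; [ring|].
  rewrite Rmult_plus_distr_l, IH.
  replace (x * (a m * (INR m * x ^ pred m))) with (a m * (x * (INR m * x ^ pred m))) by ring.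
  rewrite x_pow_pred. ring.
Qed.

Definition dP (c : nat -> nat -> R) n x := INR n * x ^ pred n + dpoly (c n) x n.

Lemma Pm_D c n x : derivable_pt_lim (Pm c n) x (dP c n x).
Proof.
  unfold Pm, dP. apply (D_plus (fun y => y ^ n) (fun y => polysum (c n) y n)).
  - apply derivable_pt_lim_pow.
  - apply polysum_D.
Qed.

Lemma dP_cont c n x : continuity_pt (dP c n) x.
Proof.
  unfold dP. apply (continuity_pt_plus (fun y => INR n * y ^ pred n) (fun y => dpoly (c n) y n)).
  - apply (continuity_pt_mult (fun _ => INR n) (fun y => y ^ pred n)).
    + apply continuity_pt_const; intros ? ?; reflexivity.
    + eapply D_cont; apply derivable_pt_lim_pow.
  - apply dpoly_cont.
Qed.

Lemma x_dP c n x : x * dP c n x = INR n * Pm c n x + polysum (fun k => (INR k - INR n) * c n k) x n.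
Proof.
  unfold dP, Pm. rewrite Rmult_plus_distr_l, x_pow_pred, x_dpoly.
  rewrite (polysum_ext _ (fun i => (INR i - INR n) * c n i + INR n * c n i)) by (intros; ring).
  rewrite polysum_lin. ring.
Qed.

Lemma Pm_ps c m x : Pm c m x = polysum (fun k => if Nat.ltb k m then c m k else 1) x (S m).
Proof.
  unfold Pm. simpl. rewrite Nat.ltb_irrefl.
  rewrite (polysum_ext (fun k => if Nat.ltb k m then c m k else 1) (c m)).
  - ring.
  - intros i Hi. apply Nat.ltb_lt in Hi. rewrite Hi. reflexivity.
Qed.

Lemma is_int_scal f l k : is_int f 0 1 l -> is_int (fun x => k * f x) 0 1 (k * l).
Proof.
  intros H. pose proof (is_int_lin f f l l (k - 1) H H) as H'.
  replace (k * l) with (l + (k - 1) * l) by ring.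
  eapply is_int_ext; [|exact H']. intros; simpl; ring.
Qed.

Lemma is_int_add f g l1 l2 : is_int f 0 1 l1 -> is_int g 0 1 l2 ->
  is_int (fun x => f x + g x) 0 1 (l1 + l2).
Proof.
  intros H1 H2. pose proof (is_int_lin f g l1 l2 1 H1 H2) as H.
  replace (l1 + l2) with (l1 + 1 * l2) by ring.
  eapply is_int_ext; [|exact H]. intros; simpl; ring.
Qed.

Section Main.
Variables (al be A B t : R) (c : nat -> nat -> R) (h : nat -> R).
Hypothesis HO : forall i j : nat,
  is_int (fun x => Pm c i x * Pm c j x * weight al be A B t x) 0 1
         (if Nat.eq_dec i j then h i else 0).

Lemma HOd i : is_int (fun x => Pm c i x * Pm c i x * weight al be A B t x) 0 1 (h i).
Proof. pose proof (HO i i) as H. destruct (Nat.eq_dec i i); [exact H| congruence]. Qed.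

Lemma HOn i j : i <> j -> is_int (fun x => Pm c i x * Pm c j x * weight al be A B t x) 0 1 0.
Proof. intros N. pose proof (HO i j) as H. destruct (Nat.eq_dec i j); [congruence| exact H]. Qed.

Lemma is_int_zero f : (forall x, 0 < x < 1 -> f x = 0) -> is_int f 0 1 0.
Proof.
  intros Hf. pose proof (is_int_scal _ _ 0 (HOd 0)) as H.
  rewrite Rmult_0_l in H. eapply is_int_ext; [|exact H].
  intros x Hx; rewrite Hf; auto; ring.
Qed.

Lemma orth m : forall a n, (m <= n)%nat ->
  is_int (fun x => polysum a x m * Pm c n x * weight al be A B t x) 0 1 0.
Proof.
  induction m as [|m IH]; intros a n Hmn.
  - apply is_int_zero. intros; simpl; ring.
  - pose proof (HOn m n ltac:(lia)) as T1.
    pose proof (IH (c m) n ltac:(lia)) as T2.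
    pose proof (IH a n ltac:(lia)) as T3.
    pose proof (is_int_add _ _ _ _ T3 (is_int_scal _ _ (a m) (is_int_lin _ _ _ _ (-1) T1 T2))) as T.
    assert (E : 0 + a m * (0 + -1 * 0) = 0) by ring. rewrite E in T.
    eapply is_int_ext; [|exact T]. intros x Hx. simpl.
    replace (x ^ m) with (Pm c m x - polysum (c m) x m) by (unfold Pm; ring). ring.
Qed.

Lemma Pm_cont n x : continuity_pt (Pm c n) x.
Proof. eapply D_cont; apply Pm_D. Qed.

Lemma QD i j x : derivable_pt_lim (fun y => Pm c i y * Pm c j y) x
  (dP c i x * Pm c j x + Pm c i x * dP c j x).
Proof. apply (D_mult (Pm c i) (Pm c j)); apply Pm_D. Qed.

Lemma QD_cont i j x : continuity_pt (fun y => dP c i y * Pm c j y + Pm c i y * dP c j y) x.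
Proof.
  apply (continuity_pt_plus (fun y => dP c i y * Pm c j y) (fun y => Pm c i y * dP c j y)).
  - apply (continuity_pt_mult (dP c i) (Pm c j)); [apply dP_cont| apply Pm_cont].
  - apply (continuity_pt_mult (Pm c i) (dP c j)); [apply Pm_cont| apply dP_cont].
Qed.

Lemma gg_t Q : 0 < t -> gg al be Q t = t * (Rpower t al * Rpower (1 - t) be * Q t).
Proof. intros Ht. unfold gg. rewrite Rpower_plus, Rpower_1 by lra. ring. Qed.

Lemma xn_val n : 0 < al -> 0 < be -> 0 < t < 1 -> 0 < h n ->
  xn al be A B t c h n = 2 * INR n + 1 + al + be + t * Rn al be B t c h n.
Proof.
  intros Hal Hbe Ht Hh.
  set (bn := fun k => (INR k - INR n) * c n k).
  pose proof (is_int_scal _ _ 2 (is_int_lin _ _ _ _ (INR n) (orth n bn n (le_n n)) (HOd n))) as T.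
  assert (L3 : is_int (fun y => y * (dP c n y * Pm c n y + Pm c n y * dP c n y) * weight al be A B t y)
                 0 1 (2 * (0 + INR n * h n))).
  { eapply is_int_ext; [|exact T]. intros x Hx. simpl.
    transitivity (2 * (x * dP c n x) * Pm c n x * weight al be A B t x); [|ring].
    rewrite x_dP. unfold bn. ring. }
  pose proof (key al be A B t (fun y => Pm c n y * Pm c n y) _ _ _ Hal Hbe Ht (QD n n) (QD_cont n n) (HOd n) L3) as K.
  assert (K' : is_int (fun y => Pm c n y ^ 2 / (1 - y) * weight al be A B t y) 0 1
    ((al + 1 + be) / be * h n + / be * (2 * (0 + INR n * h n)) + B * gg al be (fun y => Pm c n y * Pm c n y) t / be)).
  { eapply is_int_ext; [|exact K]. intros; simpl; unfold Rdiv; ring. }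
  unfold xn. rewrite (Int01_spec _ _ K').
  rewrite gg_t by lra. unfold Rn. field. split; lra.
Qed.

Lemma polysum_S a x m : polysum a x (S m) = polysum a x m + a m * x ^ m.
Proof. reflexivity. Qed.

Lemma yS_val n : 0 < al -> 0 < be -> 0 < t < 1 -> 0 < h n ->
  yn al be A B t c h (S n) = - c (S n) n + t * rn al be B t c h (S n).
Proof.
  intros Hal Hbe Ht Hh.
  set (b1 := fun k => (INR k - INR (S n)) * c (S n) k).
  set (bn := fun k => (INR k - INR n) * c n k).
  pose proof (HOn (S n) n ltac:(lia)) as T1.
  pose proof (orth n b1 n (le_n n)) as T2.
  pose proof (HOd n) as T3.
  pose proof (orth n (c n) n (le_n n)) as T4.
  pose proof (orth n bn (S n) ltac:(lia)) as T5.
  pose proof (is_int_add _ _ _ _ (is_int_add _ _ _ _ (is_int_add _ _ _ _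
     (is_int_add _ _ _ _ (is_int_scal _ _ (INR (S n) + INR n) T1) T2)
     (is_int_scal _ _ (b1 n) T3)) (is_int_scal _ _ (- b1 n) T4)) T5) as T.
  assert (L3 : is_int (fun y => y * (dP c (S n) y * Pm c n y + Pm c (S n) y * dP c n y) * weight al be A B t y)
                 0 1 ((INR (S n) + INR n) * 0 + 0 + b1 n * h n + - b1 n * 0 + 0)).
  { eapply is_int_ext; [|exact T]. intros x Hx. cbv beta. symmetry.
    transitivity ((x * dP c (S n) x) * Pm c n x * weight al be A B t x
                  + Pm c (S n) x * (x * dP c n x) * weight al be A B t x); [ring|].
    rewrite (x_dP c (S n) x), (x_dP c n x), polysum_S.
    replace (x ^ n) with (Pm c n x - polysum (c n) x n) by (unfold Pm; ring).
    unfold b1, bn. ring. }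
  pose proof (key al be A B t (fun y => Pm c (S n) y * Pm c n y) _ _ _ Hal Hbe Ht (QD (S n) n) (QD_cont (S n) n) T1 L3) as K.
  assert (K' : is_int (fun y => Pm c (S n) y * Pm c n y / (1 - y) * weight al be A B t y) 0 1
    ((al + 1 + be) / be * 0 + / be * ((INR (S n) + INR n) * 0 + 0 + b1 n * h n + - b1 n * 0 + 0)
      + B * gg al be (fun y => Pm c (S n) y * Pm c n y) t / be)).
  { eapply is_int_ext; [|exact K]. intros; reflexivity. }
  unfold yn. rewrite (Int01_spec _ _ K').
  rewrite gg_t by lra. unfold rn, b1. rewrite S_INR. field. split; lra.
Qed.

Lemma Pprev_ps n : exists a, forall x, Pprev c n x = polysum a x n.
Proof.
  destruct n as [|m].
  - exists (fun _ => 0). intros; reflexivity.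
  - eexists. intros x. simpl Pprev. apply Pm_ps.
Qed.

Lemma xPm n x : x * Pm c n x =
  Pm c (S n) x + polysum (fun i => shift (c n) i + -1 * c (S n) i) x (S n).
Proof.
  rewrite polysum_lin. unfold Pm. rewrite Rmult_plus_distr_l, polysum_shift. simpl. ring.
Qed.

Lemma alpha_val (alpha : nat -> R) n : 0 < h n ->
  (forall (n : nat) (x : R),
     x * Pm c n x = Pm c (S n) x + alpha n * Pm c n x
                    + (match n with O => 0 | S m => h n / h m end) * Pprev c n x) ->
  alpha n = p1 c n - p1 c (S n).
Proof.
  intros Hh Hrec.
  set (bb := match n with O => 0 | S m => h n / h m end).
  destruct (Pprev_ps n) as [a Ha].
  set (d := fun i => shift (c n) i + -1 * c (S n) i).
  pose proof (HOn (S n) n ltac:(lia)) as T1.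
  pose proof (HOd n) as T3.
  pose proof (orth n a n (le_n n)) as Tp.
  pose proof (orth n d n (le_n n)) as T2.
  pose proof (orth n (c n) n (le_n n)) as T4.
  pose proof (is_int_add _ _ _ _ (is_int_add _ _ _ _ T1 (is_int_scal _ _ (alpha n) T3)) (is_int_scal _ _ bb Tp)) as W1.
  pose proof (is_int_add _ _ _ _ (is_int_add _ _ _ _ (is_int_add _ _ _ _ T1 T2) (is_int_scal _ _ (d n) T3))
                (is_int_scal _ _ (- d n) T4)) as W2.
  assert (V1 : is_int (fun x => x * Pm c n x * Pm c n x * weight al be A B t x) 0 1
                  (0 + alpha n * h n + bb * 0)).
  { eapply is_int_ext; [|exact W1]. intros x Hx. cbv beta. symmetry.
    transitivity ((x * Pm c n x) * Pm c n x * weight al be A B t x); [ring|].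
    rewrite Hrec, Ha. fold bb. ring. }
  assert (V2 : is_int (fun x => x * Pm c n x * Pm c n x * weight al be A B t x) 0 1
                  (0 + 0 + d n * h n + - d n * 0)).
  { eapply is_int_ext; [|exact W2]. intros x Hx. cbv beta. symmetry.
    transitivity ((x * Pm c n x) * Pm c n x * weight al be A B t x); [ring|].
    rewrite xPm. fold d. rewrite polysum_S.
    replace (x ^ n) with (Pm c n x - polysum (c n) x n) by (unfold Pm; ring).
    ring. }
  pose proof (is_int_unique _ _ _ V1 V2) as E.
  assert (Ea : alpha n = d n).
  { apply (Rmult_eq_reg_r (h n)); [|lra]. lra. }
  rewrite Ea. unfold d. destruct n; simpl; ring.
Qed.
End Main.

Theorem lemma3p1 (al be A B t : R) (c : nat -> nat -> R) (h : nat -> R)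
  (alpha : nat -> R) :
  0 < al -> 0 < be -> 0 <= A -> 0 <= A + B -> ~ (A = 0 /\ B = 0) ->
  0 < t < 1 ->
  (* orthogonality: int_0^1 P_i P_j w = h_i delta_ij, h_i > 0 *)
  (forall i j : nat,
     is_int (fun x => Pm c i x * Pm c j x * weight al be A B t x) 0 1
            (if Nat.eq_dec i j then h i else 0)) ->
  (forall i : nat, 0 < h i) ->
  (* three-term recurrence x P_n = P_{n+1} + alpha_n P_n + beta_n P_{n-1},
     beta_n = h_n / h_{n-1}, P_{-1} = 0 *)
  (forall (n : nat) (x : R),
     x * Pm c n x = Pm c (S n) x + alpha n * Pm c n x
                    + (match n with O => 0 | S m => h n / h m end) * Pprev c n x) ->
  forall n : nat,
    xn al be A B t c h n = 2 * INR n + 1 + al + be + t * Rn al be B t c h n /\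
    alpha n = yn al be A B t c h (S n) - yn al be A B t c h n
              + t * (rn al be B t c h n - rn al be B t c h (S n)) /\
    p1 c n = - yn al be A B t c h n + t * rn al be B t c h n.
Proof.
  intros Hal Hbe HA HAB Hnz Ht HO Hh Hrec n.
  assert (C3 : forall m, p1 c m = - yn al be A B t c h m + t * rn al be B t c h m).
  { intros [|m].
    - simpl. ring.
    - rewrite (yS_val al be A B t c h HO m Hal Hbe Ht (Hh m)). simpl p1. ring. }
  split; [apply (xn_val al be A B t c h HO n Hal Hbe Ht (Hh n))|].
  split; [|apply C3].
  rewrite (alpha_val al be A B t c h HO alpha n (Hh n) Hrec).
  rewrite !C3. ring.
Qed.
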